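(* Fix an integer $k\ge2$ and, for each integer $n>k$, an arbitrary $\xi(k;n)\in(0,1)$ with $P_{n,k}(\xi(k;n))=Q_{n,k}(\xi(k;n))$. Let $\alpha=\limsup_{n\to\infty}\xi(k;n)^{n-1}$, and let $(n_p)_{p\in\mathbb N}$ be a strictly increasing sequence of integers $>k$ with $\alpha_p:=\xi(k;n_p)^{n_p-1}\to\alpha$ as $p\to\infty$. Then $\alpha=\lim_{p\to\infty}\alpha_p=0$.
   Context: For integers $k\ge2$, $n\ge1$ and $x\in\mathbb R$: $P_{n,k}(x)=\left(1+\frac{x^{n-1}}{2}\right)^{k+1}-\left(1-\frac{x^{n-1}}{2}\right)^{k+1}$, and for $n>k$: $Q_{n,k}(x)=(k+1)x^{n-k}$. (Solutions $\xi(k;n)\in(0,1)$ exist for every $n>k$.) *)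

(* Defs.v *)
From Stdlib Require Import Reals Lra Lia.
Open Scope R_scope.

Definition P (n k : nat) (x : R) : R :=
  (1 + x ^ (n - 1) / 2) ^ (k + 1) - (1 - x ^ (n - 1) / 2) ^ (k + 1).

Definition Q (n k : nat) (x : R) : R := INR (k + 1) * x ^ (n - k).

Definition is_limsup (u : nat -> R) (l : R) : Prop :=
  (forall eps, 0 < eps -> exists N, forall n, (N <= n)%nat -> u n < l + eps) /\
  (forall eps, 0 < eps -> forall N, exists n, (N <= n)%nat /\ l - eps < u n).

(* Main.v *)
Require Import Defs.
From Stdlib Require Import Reals Lra Lia.
Open Scope R_scope.

Lemma pow_le_one (t : R) (n : nat) : 0 <= t <= 1 -> t ^ n <= 1.
Proof. intros H. rewrite <- (pow1 n). apply pow_incr; lra. Qed.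

Lemma pow_anti (t : R) (m n : nat) : 0 <= t <= 1 -> (m <= n)%nat -> t ^ n <= t ^ m.
Proof.
  intros H Hmn. replace n with (m + (n - m))%nat by lia. rewrite pow_add.
  assert (0 <= t ^ m) by (apply pow_le; lra).
  pose proof (pow_le_one t (n - m) H). nra.
Qed.

Lemma DS (h : R) : 0 <= h <= 1 -> forall j : nat,
  (1 + h) ^ (j + 2) - (1 - h) ^ (j + 2) >= 2 * INR (j + 2) * h + 2 * INR j * h ^ 3
  /\ (1 + h) ^ (j + 2) + (1 - h) ^ (j + 2) >= 2 + 2 * h ^ 2.
Proof.
  intros Hh j. induction j as [|j [IH1 IH2]].
  - simpl. split; lra.
  - replace (S j + 2)%nat with (S (j + 2)) by lia.
    rewrite !S_INR, !plus_INR in *. simpl pow in *.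
    set (A := (1 + h) ^ (j + 2)) in *. set (B := (1 - h) ^ (j + 2)) in *.
    assert (E1 : (1 + h) * A - (1 - h) * B = (A - B) + h * (A + B)) by ring.
    assert (E2 : (1 + h) * A + (1 - h) * B = (A + B) + h * (A - B)) by ring.
    rewrite E1, E2. simpl INR in *.
    assert (0 <= INR j) by apply pos_INR.
    assert (h * (A + B) >= h * (2 + 2 * h ^ 2)) by (apply Rle_ge, Rmult_le_compat_l; lra).
    assert (0 <= A - B) by (assert (0 <= h ^ 3) by (apply pow_le; lra); nra).
    assert (h * (A - B) >= 0) by (apply Rle_ge, Rmult_le_pos; lra).
    split; simpl pow in *; lra.
Qed.

Theorem lemma5p4 (k : nat) (hk : (2 <= k)%nat) (xi : nat -> R)
  (hxi : forall n : nat, (k < n)%nat ->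
           0 < xi n < 1 /\ P n k (xi n) = Q n k (xi n))
  (alpha : R)
  (halpha : is_limsup (fun n => xi n ^ (n - 1)) alpha)
  (np : nat -> nat)
  (hinc : forall p, (np p < np (S p))%nat)
  (hgt : forall p, (k < np p)%nat)
  (hconv : Un_cv (fun p => xi (np p) ^ (np p - 1)) alpha) :
  alpha = 0 /\ Un_cv (fun p => xi (np p) ^ (np p - 1)) 0.
Proof.
  set (K := INR (k + 1)).
  assert (HK : 0 < K) by (unfold K; rewrite plus_INR; simpl; pose proof (pos_INR k); lra).
  assert (key : forall n, (k < n)%nat ->
    K * (1 - xi n ^ (k - 1)) >= (xi n ^ (n - 1)) ^ 3 / 4).
  { intros n Hn. destruct (hxi n Hn) as [[H0 H1] HE].
    unfold P, Q in HE. fold K in HE.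
    set (t := xi n) in *. set (y := t ^ (n - 1)) in *.
    assert (Hy : 0 < y) by (apply pow_lt; lra).
    assert (Hy1 : y <= 1) by (apply pow_le_one; lra).
    destruct (DS (y / 2) ltac:(lra) (k - 1)) as [D _].
    replace (k - 1 + 2)%nat with (k + 1)%nat in D by lia.
    rewrite HE in D. fold K in D.
    assert (Hj : 1 <= INR (k - 1)) by (apply (le_INR 1); lia).
    assert (Ey : y = t ^ (n - k) * t ^ (k - 1)).
    { unfold y. rewrite <- pow_add. f_equal. lia. }
    assert (Hz : 0 < t ^ (n - k)) by (apply pow_lt; lra).
    assert (Hz1 : t ^ (n - k) <= 1) by (apply pow_le_one; lra).
    assert (Hw : 0 < t ^ (k - 1)) by (apply pow_lt; lra).
    assert (Hw1 : t ^ (k - 1) <= 1) by (apply pow_le_one; lra).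
    assert (Hy3 : 0 < y ^ 3) by (apply pow_lt; lra).
    assert (K * t ^ (n - k) >= K * y + y ^ 3 / 4).
    { replace (2 * K * (y / 2)) with (K * y) in D by field.
      assert (y ^ 3 / 4 <= 2 * INR (k - 1) * (y / 2) ^ 3).
      { replace ((y/2)^3) with (y^3/8) by field.
        assert (0 <= (INR (k - 1) - 1) * y ^ 3) by (apply Rmult_le_pos; lra). lra. }
      lra. }
    set (z := t ^ (n - k)) in *. set (w := t ^ (k - 1)) in *.
    assert (K * z * (1 - w) = K * z - K * y) by (rewrite Ey; ring).
    assert (K * (1 - w) - K * z * (1 - w) = K * (1 - w) * (1 - z)) by ring.
    assert (0 <= K * (1 - w) * (1 - z)) by (apply Rmult_le_pos; [apply Rmult_le_pos|]; lra).
    lra. }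
  assert (npge : forall p, (p <= np p)%nat).
  { induction p; [lia|]. specialize (hinc p). lia. }
  assert (Hpos : forall p, 0 < xi (np p) ^ (np p - 1)).
  { intros p. apply pow_lt. apply (hxi _ (hgt p)). }
  assert (Ha : alpha = 0).
  { destruct (Rtotal_order alpha 0) as [Hl|[He|Hg]]; auto; exfalso.
    - destruct (hconv (- alpha) ltac:(lra)) as [N HN].
      specialize (HN N (Nat.le_refl N)). specialize (Hpos N).
      unfold Rdist in HN. apply Rabs_def2 in HN. lra.
    - destruct (hconv (alpha / 2) ltac:(lra)) as [N1 HN1].
      set (c := (alpha / 2) ^ 3 / 4 / K).
      assert (Hc : 0 < c) by (unfold c; apply Rdiv_lt_0_compat; [|lra];
                              apply Rdiv_lt_0_compat; [apply pow_lt|]; lra).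
      assert (Hc1 : c <= 1).
      { (* c <= y^3/4/K <= 1 - w <= 1 using key at N1 *)
        specialize (HN1 N1 (Nat.le_refl _)). unfold Rdist in HN1. apply Rabs_def2 in HN1; cbv beta in HN1.
        pose proof (key _ (hgt N1)) as Hk.
        set (y := xi (np N1) ^ (np N1 - 1)) in *.
        assert (0 < xi (np N1) ^ (k - 1)) by (apply pow_lt; apply (hxi _ (hgt N1))).
        assert ((alpha/2)^3 <= y^3) by (apply pow_incr; lra).
        unfold c. apply (Rmult_le_reg_r K); [lra|].
        assert ((alpha/2)^3/4/K*K = (alpha/2)^3/4) by (field; lra). assert (0 < K * xi (np N1) ^ (k - 1)) by (apply Rmult_lt_0_compat; lra). lra. }
      destruct (pow_lt_1_zero (1 - c) ltac:(rewrite Rabs_right; lra) (alpha / 2) ltac:(lra))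
        as [M HM].
      set (p := Nat.max N1 ((k - 1) * M + 1)).
      specialize (HN1 p ltac:(unfold p; lia)). unfold Rdist in HN1. apply Rabs_def2 in HN1; cbv beta in HN1.
      pose proof (key _ (hgt p)) as Hk.
      specialize (HM M (Nat.le_refl _)). rewrite Rabs_right in HM
        by (apply Rle_ge, pow_le; lra).
      destruct (hxi _ (hgt p)) as [[Ht0 Ht1] _].
      set (t := xi (np p)) in *. set (y := t ^ (np p - 1)) in *.
      assert ((alpha/2)^3 <= y^3) by (apply pow_incr; lra).
      assert (Hw : t ^ (k - 1) <= 1 - c).
      { unfold c. apply (Rmult_le_reg_r K); [lra|].
        assert ((alpha/2)^3/4/K*K = (alpha/2)^3/4) by (field; lra). nra. }
      assert (y <= (t ^ (k - 1)) ^ M).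
      { rewrite <- pow_mult. apply pow_anti; [lra|].
        pose proof (npge p). unfold p in *. lia. }
      assert ((t ^ (k - 1)) ^ M <= (1 - c) ^ M).
      { apply pow_incr. split; [apply pow_le; lra| exact Hw]. }
      lra. }
  split; [exact Ha|]. rewrite <- Ha. exact hconv.
Qed.
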